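(* Let $N$ be an absolute prime with $n>3$ decimal digits that is not a repunit. Then $11088\mid n$ (note $11088=\mathrm{lcm}(16,18,22,28)$).
   Context: For a positive integer $N$ with decimal representation $d_1d_2\dots d_n$ (digits $d_k\in\{0,\dots,9\}$, $d_1\neq 0$), a permutation of the digits of $N$ is any integer $\sum_{k=1}^{n} d_{\sigma(k)}10^{n-k}$ with $\sigma$ a permutation of $\{1,\dots,n\}$. $N$ is called an absolute prime if every integer obtained by a permutation of the digits of $N$ (including $N$ itself) is prime. A repunit is an integer $A_m=(10^m-1)/9$, all of whose decimal digits are $1$. *)

(* Defs.v *)
From mathcomp Require Import all_boot.
Set Implicit Arguments. Unset Strict Implicit. Unset Printing Implicit Defensive.

Fixpoint rev_digits_aux (fuel n : nat) : seq nat :=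
  match fuel with
  | 0 => [::]
  | fuel'.+1 => if n == 0 then [::] else (n %% 10) :: rev_digits_aux fuel' (n %/ 10)
  end.

Definition digits (n : nat) : seq nat := rev (rev_digits_aux n n).

Definition from_digits (s : seq nat) : nat := foldl (fun a d => a * 10 + d) 0 s.

Definition absolute_prime (N : nat) : Prop :=
  0 < N /\ forall s : seq nat, perm_eq s (digits N) -> prime (from_digits s).

Definition repunit (m : nat) : nat := (10 ^ m - 1) %/ 9.

Definition is_repunit (N : nat) : Prop := exists m, N = repunit m.

(* Main.v *)
Require Import Defs.
From mathcomp Require Import all_boot.
From mathcomp Require Import zify.
Set Implicit Arguments. Unset Strict Implicit. Unset Printing Implicit Defensive.


Notation fd := from_digits.

Lemma foldl_fd (s : seq nat) (x : nat) :
  foldl (fun a d => a * 10 + d) x s = x * 10 ^ size s + fd s.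
Proof.
elim: s x => [|y s IH] x /=; first by rewrite expn0 muln1 addn0.
rewrite /fd /= IH [in RHS]IH add0n expnS; lia.
Qed.

Lemma fd_cat s t : fd (s ++ t) = fd s * 10 ^ size t + fd t.
Proof. by rewrite /fd foldl_cat foldl_fd. Qed.

Lemma fd_cons x s : fd (x :: s) = x * 10 ^ size s + fd s.
Proof. by rewrite -cat1s fd_cat /fd /=. Qed.

Lemma fd_nseq m a : fd (nseq m a) = a * fd (nseq m 1).
Proof.
elim: m => [|m IH] //=; first by rewrite muln0.
by rewrite !fd_cons IH !size_nseq mul1n mulnDr.
Qed.

Lemma fd_lb s : (forall x, x \in s -> 0 < x) -> 0 < size s -> 10 ^ (size s).-1 <= fd s.
Proof.
case: s => [|x s] Hs //= _.
rewrite fd_cons.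
have hx : 0 < x by apply: Hs; rewrite inE eqxx.
have : 1 * 10 ^ size s <= x * 10 ^ size s by rewrite leq_mul2r hx orbT.
rewrite mul1n => h; exact: leq_trans h (leq_addr _ _).
Qed.

Definition fdm p (s : seq nat) := foldl (fun a d => (a * 10 + d) %% p) 0 s.

Lemma fdm_gen p s x :
  foldl (fun a d => (a * 10 + d) %% p) (x %% p) s = foldl (fun a d => a * 10 + d) x s %% p.
Proof.
elim: s x => [|y s IH] x //=.
rewrite -IH; congr foldl; by rewrite -modnDml modnMml modnDml.
Qed.

Lemma fdmE p s : fdm p s = fd s %% p.
Proof. by rewrite /fdm /fd; have := fdm_gen p s 0; rewrite mod0n. Qed.

Definition pw p k := iter k (fun x => x * 10 %% p) (1 %% p).

Lemma pwE p k : pw p k = 10 ^ k %% p.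
Proof.
elim: k => [|k IH] //=.
by rewrite IH modnMml expnSr.
Qed.

Lemma fd_mod3 s : fd s = sumn s %[mod 3].
Proof.
elim/last_ind: s => [|s x IH] //.
rewrite -cats1 fd_cat sumn_cat /= addn0 expn1.
have -> : fd s * 10 + x = (3 * fd s) * 3 + (fd s + x) by lia.
by rewrite modnMDl -modnDml IH modnDml.
Qed.

Definition F m := fd (nseq m 1).

Lemma F_repunit m : F m = repunit m.
Proof.
rewrite /repunit.
have : 9 * F m = 10 ^ m - 1.
  elim: m => [|m IH] //. rewrite /F /= fd_cons size_nseq -/(F m) mulnDr IH expnS.
  have := expn_gt0 10 m. lia.
move=> <-. by rewrite mulKn.
Qed.


Lemma rda_fd fuel n : n <= fuel -> fd (rev (rev_digits_aux fuel n)) = n.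
Proof.
elim: fuel n => [|f IH] n Hn /=; first by case: n Hn.
case: eqP => [->|Hn0] //.
rewrite rev_cons -cats1 fd_cat /= expn1 IH; first by rewrite /fd /= -divn_eq.
have : n %/ 10 < n by rewrite ltn_Pdiv //; lia.
lia.
Qed.

Lemma digits_fd N : fd (digits N) = N.
Proof. exact: rda_fd. Qed.

Lemma rda_lt fuel n x : x \in rev_digits_aux fuel n -> x < 10.
Proof.
elim: fuel n => [|f IH] n //=.
case: eqP => // _. rewrite inE => /orP [/eqP -> | /IH //].
by rewrite ltn_mod.
Qed.

Lemma digits_lt N x : x \in digits N -> x < 10.
Proof. rewrite /digits mem_rev; exact: rda_lt. Qed.


Definition Hyp (L : seq nat) := forall s, perm_eq s L -> prime (fd s).

Lemma nodiv L s p : Hyp L -> perm_eq s L -> 1 < p -> p < fd s -> p %| fd s -> False.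
Proof.
move=> H Hs Hp Hlt Hd.
have /primeP [_ Hdv] := H s Hs.
by move: (Hdv p Hd) => /orP [/eqP|/eqP]; lia.
Qed.

Lemma perm_rem_last (L : seq nat) x : x \in L -> perm_eq (rem x L ++ [:: x]) L.
Proof. by move=> Hx; rewrite perm_catC /= perm_sym perm_to_rem. Qed.

Definition D := [:: 1; 3; 7; 9].

Lemma digits_D L : Hyp L -> (forall x, x \in L -> x < 10) -> 2 <= size L ->
  forall x, x \in L -> x \in D.
Proof.
move=> H Hlt Hsz.
have H0 : 0 \notin L.
  apply/negP => H0.
  have Hp := perm_rem_last H0.
  have Hv : fd (rem 0 L ++ [:: 0]) = fd (rem 0 L) * 10 by rewrite fd_cat /= expn1 !addn0.
  have Hpr := H _ Hp. rewrite Hv in Hpr.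
  apply: (nodiv H Hp (p := 2)) => //; rewrite Hv; last by rewrite dvdn_mull.
  move: Hpr; case: (fd (rem 0 L)) => [|k] Hk //.
move=> x Hx.
have Hx10 := Hlt x Hx.
have Hxn0 : 0 < x by case: x Hx {Hx10} => //; rewrite (negbTE H0).
have Hp := perm_rem_last Hx.
have Hpos : 0 < fd (rem x L).
  have Hsz' : 0 < size (rem x L) by move: Hsz; rewrite (size_rem Hx); case: (size L) => [|[|k]].
  apply: leq_trans (fd_lb _ Hsz'); first by rewrite expn_gt0.
  move=> y /mem_rem Hy. case: y Hy => [|y] //. by rewrite (negbTE H0).
have Hv : fd (rem x L ++ [:: x]) = fd (rem x L) * 10 + x by rewrite fd_cat /= expn1.
case: x Hx Hx10 Hxn0 Hp Hv Hpos => [|[|[|[|[|[|[|[|[|[|x]]]]]]]]]] //= Hx _ _ Hp Hv Hpos.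
- exfalso; apply: (nodiv H Hp (p := 2)) => //; rewrite Hv; last by rewrite dvdn_addl // dvdn_mull.
  lia.
- exfalso; apply: (nodiv H Hp (p := 2)) => //; rewrite Hv; last by rewrite dvdn_addl // dvdn_mull.
  lia.
- exfalso; apply: (nodiv H Hp (p := 5)) => //; rewrite Hv; last by rewrite dvdn_addl // dvdn_mull.
  lia.
- exfalso; apply: (nodiv H Hp (p := 2)) => //; rewrite Hv; last by rewrite dvdn_addl // dvdn_mull.
  lia.
- exfalso; apply: (nodiv H Hp (p := 2)) => //; rewrite Hv; last by rewrite dvdn_addl // dvdn_mull.
  lia.
Qed.


Definition M c1 c3 c7 c9 : seq nat := nseq c1 1 ++ nseq c3 3 ++ nseq c7 7 ++ nseq c9 9.

Lemma count_M x c1 c3 c7 c9 :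
  count_mem x (M c1 c3 c7 c9) = (1 == x) * c1 + (3 == x) * c3 + (7 == x) * c7 + (9 == x) * c9.
Proof. by rewrite /M !count_cat !count_nseq !addnA. Qed.

Lemma mem_M x c1 c3 c7 c9 : x \in M c1 c3 c7 c9 -> x \in D.
Proof.
by rewrite /M !mem_cat => /or4P [] /nseqP [-> _].
Qed.

Lemma permD (s t : seq nat) : (forall x, x \in s -> x \in D) -> (forall x, x \in t -> x \in D) ->
  (forall x, x \in D -> count_mem x s = count_mem x t) -> perm_eq s t.
Proof.
move=> Hs Ht Hc; apply/allP => x; rewrite mem_cat => /orP [/Hs|/Ht] Hx; apply/eqP; exact: Hc.
Qed.

Lemma perm_M (L : seq nat) : (forall x, x \in L -> x \in D) ->
  perm_eq L (M (count_mem 1 L) (count_mem 3 L) (count_mem 7 L) (count_mem 9 L)).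
Proof.
move=> HL; apply: (permD HL (fun x => @mem_M x _ _ _ _)).
move=> x; rewrite count_M !inE => /or4P [] /eqP -> /=; lia.
Qed.

Lemma sumn_M c1 c3 c7 c9 : sumn (M c1 c3 c7 c9) = c1 + 3 * c3 + 7 * c7 + 9 * c9.
Proof. rewrite /M !sumn_cat !sumn_nseq; lia. Qed.

Lemma size_M c1 c3 c7 c9 : size (M c1 c3 c7 c9) = c1 + c3 + c7 + c9.
Proof. rewrite /M !size_cat !size_nseq; lia. Qed.

Lemma fd_big L s : (forall x, x \in L -> x \in D) -> perm_eq s L -> 4 <= size L -> 1000 <= fd s.
Proof.
move=> HD Hp Hsz.
have Hsz' : size s = size L by apply: perm_size.
have : 10 ^ (size s).-1 <= fd s.
  apply: fd_lb; last by lia.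
  move=> x; rewrite (perm_mem Hp) => /HD; rewrite !inE => /or4P [] /eqP -> //.
have : 10 ^ 3 <= 10 ^ (size s).-1 by rewrite leq_exp2l //; lia.
rewrite [10 ^ 3]/=. lia.
Qed.

Lemma mod3_contra L c1 c3 c7 c9 : Hyp L -> (forall x, x \in L -> x \in D) -> 4 <= size L ->
  perm_eq L (M c1 c3 c7 c9) -> (c1 + c7) %% 3 = 0 -> False.
Proof.
move=> H HD Hsz Hp Hc.
apply: (nodiv H (perm_refl L) (p := 3)) => //.
  have := fd_big HD (perm_refl L) Hsz; lia.
rewrite /dvdn fd_mod3 (perm_sumn Hp) sumn_M.
have -> : c1 + 3 * c3 + 7 * c7 + 9 * c9 = (c1 + c7) + 3 * (c3 + 2 * c7 + 3 * c9) by lia.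
by rewrite -modnDm Hc modnMr.
Qed.

Definition cov e1 e3 e7 e9 p :=
  all (fun r => has (fun P => (r * pw p (size P) + fdm p P) %% p == 0)
                    (permutations (M e1 e3 e7 e9))) (iota 0 p).

Lemma split_perm L c1 c3 c7 c9 e1 e3 e7 e9 P :
  (forall x, x \in L -> x \in D) ->
  perm_eq L (M c1 c3 c7 c9) -> e1 <= c1 -> e3 <= c3 -> e7 <= c7 -> e9 <= c9 ->
  perm_eq P (M e1 e3 e7 e9) -> perm_eq (M (c1 - e1) (c3 - e3) (c7 - e7) (c9 - e9) ++ P) L.
Proof.
move=> HD Hp h1 h3 h7 h9 HP.
apply: permD => //.
- move=> x; rewrite mem_cat => /orP [/mem_M //|]; rewrite (perm_mem HP); exact: mem_M.
- move=> x Hx. rewrite count_cat ((permP HP) (pred1 x)) ((permP Hp) (pred1 x)) !count_M.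
  move: Hx; rewrite !inE => /or4P [] /eqP -> /=; lia.
Qed.

Lemma cov_sound L c1 c3 c7 c9 e1 e3 e7 e9 p :
  Hyp L -> (forall x, x \in L -> x \in D) -> 4 <= size L ->
  perm_eq L (M c1 c3 c7 c9) -> e1 <= c1 -> e3 <= c3 -> e7 <= c7 -> e9 <= c9 ->
  1 < p -> p < 1000 -> cov e1 e3 e7 e9 p -> False.
Proof.
move=> H HD Hsz Hp h1 h3 h7 h9 Hp1 Hp2 /allP Hc.
set x := fd (M (c1 - e1) (c3 - e3) (c7 - e7) (c9 - e9)).
have Hxi : x %% p \in iota 0 p by rewrite mem_iota add0n ltn_pmod //; lia.
have /hasP [P] := Hc (x %% p) Hxi.
rewrite mem_permutations => HP /eqP Hr.
have Hs := split_perm HD Hp h1 h3 h7 h9 HP.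
apply: (nodiv H Hs Hp1).
  have := fd_big HD Hs Hsz; lia.
rewrite /dvdn fd_cat -/x -modnDm -modnMm -pwE -fdmE modnDml.
by apply/eqP. Qed.

Definition covlist : seq (nat*nat*nat*nat*nat) := [::(0,0,2,3,7); (0,0,3,2,7); (0,1,1,2,7); (0,1,2,1,7); (0,2,0,3,7); (0,2,1,1,7); (0,2,3,0,7); (0,3,0,2,7); (0,3,2,0,7); (1,0,1,3,7); (1,0,2,2,7); (1,0,3,1,7); (1,1,0,3,13); (1,1,1,1,7); (1,1,2,0,7); (1,2,0,2,7); (1,2,1,0,7); (1,3,0,1,7); (2,0,0,3,7); (2,0,1,2,7); (2,0,2,1,7); (2,0,3,0,7); (2,1,0,2,7); (2,1,1,0,7); (2,2,0,1,7); (2,3,0,0,7); (3,0,0,2,7); (3,0,1,1,13); (3,0,2,0,7); (3,1,0,1,7); (3,2,0,0,7)].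
Definition directlist : seq (nat*nat*nat*nat*seq nat*nat) := [::(0,0,2,2,[:: 7; 7; 9; 9],11); (0,2,2,0,[:: 3; 3; 7; 7],11); (1,0,1,2,[:: 1; 7; 9; 9],7); (1,1,0,2,[:: 1; 9; 3; 9],7); (1,2,0,1,[:: 1; 3; 3; 9],13); (2,0,0,2,[:: 1; 1; 9; 9],11); (2,0,2,0,[:: 1; 1; 7; 7],11); (2,1,0,1,[:: 1; 1; 3; 9],17); (2,2,0,0,[:: 1; 1; 3; 3],11)].

Lemma covlist_ok : all (fun t => let: (e1,e3,e7,e9,p) := t in cov e1 e3 e7 e9 p && (1 < p < 1000)) covlist.
Proof. Time vm_compute. done. Qed.

Lemma directlist_ok : all (fun t => let: (c1,c3,c7,c9,P,p) := t in
  [&& perm_eq P (M c1 c3 c7 c9), fdm p P == 0, 1 < p < 1000 & [&& c1 < 3, c3 < 3, c7 < 3 & c9 < 3]]) directlist.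
Proof. Time vm_compute. done. Qed.

Definition cl x := if x < 3 then x else 3 + (x - 3) %% 3.

Definition goodb c1 c3 c7 c9 := let l := [:: c1; c3; c7; c9] in
  let nz := count (fun x => x != 0) l in (nz == 1) || ((nz == 2) && (1 \in l)).

Definition chk c1 c3 c7 c9 := [|| goodb c1 c3 c7 c9, (c1 + c7) %% 3 == 0,
  has (fun t => let: (e1,e3,e7,e9,p) := t in [&& e1 <= c1, e3 <= c3, e7 <= c7 & e9 <= c9]) covlist |
  has (fun t => let: (d1,d3,d7,d9,P,p) := t in [&& d1 == c1, d3 == c3, d7 == c7 & d9 == c9]) directlist].

Definition fin := all (fun a => all (fun b => all (fun c => all (fun d =>
  ((3 < a + b + c + d) || (3 <= a) || (3 <= b) || (3 <= c) || (3 <= d)) ==> chk a b c d)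
  (iota 0 6)) (iota 0 6)) (iota 0 6)) (iota 0 6).

Lemma fin_ok : fin.
Proof. Time vm_compute. done. Qed.

Lemma cl_le x : cl x <= x. Proof. rewrite /cl; case: (ltnP x 3) => h //; have := ltn_pmod (x - 3) (isT : 0 < 3); lia. Qed.
Lemma cl_lt6 x : cl x < 6. Proof. rewrite /cl; case: (ltnP x 3) => h; last have := ltn_pmod (x - 3) (isT : 0 < 3); lia. Qed.
Lemma cl_mod x : cl x %% 3 = x %% 3.
Proof.
rewrite /cl; case: (ltnP x 3) => h //.
rewrite -modnDmr modn_mod modnDmr; congr (_ %% _); lia.
Qed.
Lemma cl_cases x : (x < 3 /\ cl x = x) \/ (3 <= x /\ 3 <= cl x).
Proof. rewrite /cl; case: (ltnP x 3) => h; [left|right]; lia. Qed.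
Lemma cl_nz x : (cl x != 0) = (x != 0).
Proof. case: (cl_cases x) => [[_ ->]|[h1 h2]] //; apply/negP/negP => /eqP h; lia. Qed.
Lemma cl_1 x : (cl x == 1) = (x == 1).
Proof. case: (cl_cases x) => [[_ ->]|[h1 h2]] //; apply/eqP/eqP; lia. Qed.

Lemma goodb_cl c1 c3 c7 c9 : goodb (cl c1) (cl c3) (cl c7) (cl c9) = goodb c1 c3 c7 c9.
Proof. by rewrite /goodb /= !cl_nz !inE !(eq_sym 1) !cl_1. Qed.

Lemma structure L : Hyp L -> (forall x, x \in L -> x \in D) -> 4 <= size L ->
  goodb (count_mem 1 L) (count_mem 3 L) (count_mem 7 L) (count_mem 9 L).
Proof.
move=> H HD Hsz.
have Hp := perm_M HD.
move: Hp.
set c1 := count_mem 1 L; set c3 := count_mem 3 L; set c7 := count_mem 7 L; set c9 := count_mem 9 L.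
move=> Hp.
have Hsum : size L = c1 + c3 + c7 + c9 by rewrite (perm_size Hp) size_M.
have Hchk : chk (cl c1) (cl c3) (cl c7) (cl c9).
  have := fin_ok; rewrite /fin.
  move=> /allP /(_ (cl c1)); rewrite mem_iota cl_lt6 => /(_ isT).
  move=> /allP /(_ (cl c3)); rewrite mem_iota cl_lt6 => /(_ isT).
  move=> /allP /(_ (cl c7)); rewrite mem_iota cl_lt6 => /(_ isT).
  move=> /allP /(_ (cl c9)); rewrite mem_iota cl_lt6 => /(_ isT).
  move=> /implyP; apply.
  case: (cl_cases c1) => [[_ ->]|[_ ->]]; last by rewrite !orbT.
  case: (cl_cases c3) => [[_ ->]|[_ ->]]; last by rewrite !orbT.
  case: (cl_cases c7) => [[_ ->]|[_ ->]]; last by rewrite !orbT.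
  case: (cl_cases c9) => [[_ ->]|[_ ->]]; last by rewrite !orbT.
  apply/orP; left; apply/orP; left; apply/orP; left; apply/orP; left. lia.
case/or4P: Hchk.
- by rewrite goodb_cl.
- move=> Hm; exfalso; apply: (mod3_contra H HD Hsz Hp).
  by rewrite -modnDm -(cl_mod c1) -(cl_mod c7) modnDm; apply/eqP.
- move=> /hasP [[[[[e1 e3] e7] e9] p] Hin] /and4P [h1 h3 h7 h9].
  have := (allP covlist_ok) _ Hin => /= /andP [Hcov /andP [Hp1 Hp2]].
  exfalso; apply: (cov_sound H HD Hsz Hp _ _ _ _ Hp1 Hp2 Hcov).
  + exact: leq_trans h1 (cl_le _).
  + exact: leq_trans h3 (cl_le _).
  + exact: leq_trans h7 (cl_le _).
  + exact: leq_trans h9 (cl_le _).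
- move=> /hasP [[[[[[d1 d3] d7] d9] P] p] Hin] /and4P [/eqP h1 /eqP h3 /eqP h7 /eqP h9].
  have := (allP directlist_ok) _ Hin => /= /and4P [HP Hf /andP [Hp1 Hp2] /and4P [l1 l3 l7 l9]].
  have e1 : cl c1 = c1 by case: (cl_cases c1) => [[_ ->]|[_]] //; lia.
  have e3 : cl c3 = c3 by case: (cl_cases c3) => [[_ ->]|[_]] //; lia.
  have e7 : cl c7 = c7 by case: (cl_cases c7) => [[_ ->]|[_]] //; lia.
  have e9 : cl c9 = c9 by case: (cl_cases c9) => [[_ ->]|[_]] //; lia.
  rewrite h1 h3 h7 h9 e1 e3 e7 e9 in HP.
  have HPL : perm_eq P L by rewrite (perm_trans HP) // perm_sym.
  exfalso; apply: (nodiv H HPL Hp1).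
    have := fd_big HD HPL Hsz; lia.
  by rewrite /dvdn -fdmE.
Qed.


Lemma modE3 a b X Y Z W p : (a*X*Y + b*Z + a*W) %% p = (a*(X%%p)*(Y%%p) + b*(Z%%p) + a*(W%%p)) %% p.
Proof.
rewrite -modnDm -[RHS]modnDm; congr ((_ + _) %% p); last by rewrite modnMmr.
rewrite -modnDm -[RHS]modnDm; congr ((_ + _) %% p); last by rewrite modnMmr.
by rewrite -!mulnA -modnMmr -[RHS]modnMmr modnMm.
Qed.

Definition sk m k (a b : nat) : seq nat := nseq (m - k) a ++ b :: nseq k a.

Lemma fd_sk m k a b : fd (sk m k a b) = a * F (m - k) * 10 ^ k.+1 + b * 10 ^ k + a * F k.
Proof.
rewrite /sk fd_cat fd_cons.
have -> : size (b :: nseq k a) = k.+1 by rewrite /= size_nseq.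
by rewrite !size_nseq (fd_nseq (m - k) a) (fd_nseq k a) addnA.
Qed.

Lemma sk_perm L a b m k : a \in D -> b \in D -> (forall x, x \in L -> x \in D) ->
  (forall x, x \in D -> count_mem x L = (a == x) * m + (b == x)) -> k <= m ->
  perm_eq (sk m k a b) L.
Proof.
move=> Ha Hb HD Hc Hk; apply: permD => //.
  move=> x; rewrite mem_cat inE => /orP [/nseqP [-> _] //|/orP [/eqP -> //|/nseqP [-> _] //]].
move=> x Hx; rewrite Hc // /sk count_cat /= !count_nseq /=.
case: (a == x); case: (b == x); lia.
Qed.

Lemma F_per p q y : 10 ^ q %% p = 1 -> F q %% p = 0 -> F y %% p = F (y %% q) %% p.
Proof.
move=> H1 H0.
have Hj : forall j z, F (j * q + z) %% p = F z %% p.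
  elim=> [|j IH] z; first by rewrite mul0n add0n.
  rewrite mulSn -addnA /F nseqD fd_cat -/(F q) -/(F (j * q + z)).
  by rewrite -modnDm -modnMml H0 mod0n add0n modn_mod IH.
by rewrite {1}(divn_eq y q) Hj.
Qed.

Definition smallcert : seq (nat*nat*nat*nat*nat) := [::(3,1,3,0,3); (3,1,7,3,13); (3,1,9,0,3); (3,3,1,2,13); (3,3,7,0,47); (3,3,9,0,3); (3,7,1,0,19); (3,7,3,0,3); (3,7,9,0,3); (3,9,1,1,7); (3,9,3,0,3); (3,9,7,0,13); (4,1,3,3,7); (4,1,7,2,7); (4,1,9,1,19); (4,3,1,1,7); (4,3,7,2,7); (4,3,9,0,3); (4,7,1,1,23); (4,7,3,1,11); (4,7,9,0,13); (4,9,1,4,7); (4,9,3,0,3); (4,9,7,2,7); (5,1,3,1,19); (5,1,7,0,3); (5,1,9,2,17); (5,3,1,2,131); (5,3,7,4,31); (5,3,9,0,3); (5,7,1,0,3); (5,7,3,5,19); (5,7,9,5,43); (5,9,1,0,17); (5,9,3,0,3); (5,9,7,4,17); (6,1,3,0,3); (6,1,7,0,7); (6,1,9,0,3); (6,3,1,5,7); (6,3,7,0,7); (6,3,9,0,3); (6,7,1,3,13); (6,7,3,0,3); (6,7,9,0,3); (6,9,1,2,7); (6,9,3,0,3); (6,9,7,0,7); (7,1,3,5,7); (7,1,7,4,7); (7,1,9,1,7); (7,3,1,3,7); (7,3,7,4,7); (7,3,9,0,3); (7,7,1,0,17); (7,7,3,4,13); (7,7,9,3,17); (7,9,1,0,7);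 (7,9,3,0,3); (7,9,7,4,7); (8,1,3,4,7); (8,1,7,0,3); (8,1,9,0,7); (8,3,1,2,7); (8,3,7,3,7); (8,3,9,0,3); (8,7,1,0,3); (8,7,3,1,11); (8,7,9,6,17); (8,9,1,5,7); (8,9,3,0,3); (8,9,7,3,7); (9,1,3,0,3); (9,1,7,5,7); (9,1,9,0,3); (9,3,1,4,7); (9,3,7,5,7); (9,3,9,0,3); (9,7,1,2,29); (9,7,3,0,3); (9,7,9,0,3); (9,9,1,1,7); (9,9,3,0,3); (9,9,7,5,7); (10,1,3,3,7); (10,1,7,2,7); (10,1,9,5,7); (10,3,1,1,7); (10,3,7,2,7); (10,3,9,0,3); (10,7,1,5,13); (10,7,3,1,11); (10,7,9,0,13); (10,9,1,4,7); (10,9,3,0,3); (10,9,7,2,7); (11,1,3,7,17); (11,1,7,0,3); (11,1,9,3,17); (11,3,1,10,17); (11,3,7,8,17); (11,3,9,0,3); (11,7,1,0,3); (11,7,3,8,19); (11,7,9,0,17); (11,9,1,1,17); (11,9,3,0,3); (11,9,7,5,17); (12,1,3,0,3); (12,1,7,0,7); (12,1,9,0,3); (12,3,1,5,7); (12,3,7,0,7); (12,3,9,0,3); (12,7,1,3,13); (12,7,3,0,3); (12,7,9,0,3); (12,9,1,2,7); (12,9,3,0,3); (12,9,7,0,7); (13,1,3,5,7); (13,1,7,4,7); (13,1,9,1,7); (13,3,1,3,7); (13,3,7,4,7); (13,3,9,0,3); (13,7,1,7,17); (13,7,3,4,13); (13,7,9,10,17); (13,9,1,0,7); (13,9,3,0,3);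 (13,9,7,4,7); (14,1,3,4,7); (14,1,7,0,3); (14,1,9,0,7); (14,3,1,2,7); (14,3,7,3,7); (14,3,9,0,3); (14,7,1,0,3); (14,7,3,1,11); (14,7,9,14,17); (14,9,1,5,7); (14,9,3,0,3); (14,9,7,3,7); (15,1,3,0,3); (15,1,7,5,7); (15,1,9,0,3); (15,3,1,4,7); (15,3,7,5,7); (15,3,9,0,3); (15,7,1,3,19); (15,7,3,0,3); (15,7,9,0,3); (15,9,1,1,7); (15,9,3,0,3); (15,9,7,5,7); (16,1,3,3,7); (16,1,7,2,7); (16,1,9,5,7); (16,3,1,1,7); (16,3,7,2,7); (16,3,9,0,3); (16,7,1,5,13); (16,7,3,1,11); (16,7,9,0,13); (16,9,1,4,7); (16,9,3,0,3); (16,9,7,2,7); (17,1,3,11,17); (17,1,7,0,3); (17,1,9,7,17); (17,3,1,14,17); (17,3,7,12,17); (17,3,9,0,3); (17,7,1,0,3); (17,7,3,2,17); (17,7,9,4,17); (17,9,1,5,17); (17,9,3,0,3); (17,9,7,9,17); (18,1,3,0,3); (18,1,7,0,7); (18,1,9,0,3); (18,3,1,5,7); (18,3,7,0,7); (18,3,9,0,3); (18,7,1,3,13); (18,7,3,0,3); (18,7,9,0,3); (18,9,1,2,7); (18,9,3,0,3); (18,9,7,0,7); (19,1,3,5,7); (19,1,7,4,7); (19,1,9,1,7); (19,3,1,3,7); (19,3,7,4,7); (19,3,9,0,3); (19,7,1,9,17); (19,7,3,4,13); (19,7,9,12,17); (19,9,1,0,7); (19,9,3,0,3); (19,9,7,4,7);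 (20,1,3,4,7); (20,1,7,0,3); (20,1,9,0,7); (20,3,1,2,7); (20,3,7,3,7); (20,3,9,0,3); (20,7,1,0,3); (20,7,3,1,11); (20,7,9,8,17); (20,9,1,5,7); (20,9,3,0,3); (20,9,7,3,7); (21,1,3,0,3); (21,1,7,5,7); (21,1,9,0,3); (21,3,1,4,7); (21,3,7,5,7); (21,3,9,0,3); (21,7,1,12,17); (21,7,3,0,3); (21,7,9,0,3); (21,9,1,1,7); (21,9,3,0,3); (21,9,7,5,7); (22,1,3,3,7); (22,1,7,2,7); (22,1,9,5,7); (22,3,1,1,7); (22,3,7,2,7); (22,3,9,0,3); (22,7,1,5,13); (22,7,3,1,11); (22,7,9,0,13); (22,9,1,4,7); (22,9,3,0,3); (22,9,7,2,7); (23,1,3,10,17); (23,1,7,0,3); (23,1,9,6,17); (23,3,1,13,17); (23,3,7,11,17); (23,3,9,0,3); (23,7,1,0,3); (23,7,3,1,17); (23,7,9,3,17); (23,9,1,4,17); (23,9,3,0,3); (23,9,7,8,17); (24,1,3,0,3); (24,1,7,0,7); (24,1,9,0,3); (24,3,1,5,7); (24,3,7,0,7); (24,3,9,0,3); (24,7,1,3,13); (24,7,3,0,3); (24,7,9,0,3); (24,9,1,2,7); (24,9,3,0,3); (24,9,7,0,7); (25,1,3,5,7); (25,1,7,4,7); (25,1,9,1,7); (25,3,1,3,7); (25,3,7,4,7); (25,3,9,0,3); (25,7,1,14,17); (25,7,3,4,13); (25,7,9,1,17); (25,9,1,0,7); (25,9,3,0,3); (25,9,7,4,7); (26,1,3,4,7);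 (26,1,7,0,3); (26,1,9,0,7); (26,3,1,2,7); (26,3,7,3,7); (26,3,9,0,3); (26,7,1,0,3); (26,7,3,1,11); (26,7,9,11,17); (26,9,1,5,7); (26,9,3,0,3); (26,9,7,3,7)].
Definition cert17 : seq (nat*nat*nat*nat) := [::(1,1,3,14); (1,1,7,3); (1,1,9,10); (1,3,1,1); (1,3,7,15); (1,3,9,14); (1,7,1,4); (1,7,3,5); (1,7,9,7); (1,9,1,8); (1,9,3,1); (1,9,7,12); (2,1,3,11); (2,1,7,0); (2,1,9,7); (2,3,1,14); (2,3,7,12); (2,3,9,11); (2,7,1,1); (2,7,3,2); (2,7,9,4); (2,9,1,5); (2,9,3,14); (2,9,7,9); (3,1,3,4); (3,1,7,9); (3,1,9,0); (3,3,1,7); (3,3,7,5); (3,3,9,4); (3,7,1,10); (3,7,3,11); (3,7,9,13); (3,9,1,14); (3,9,3,7); (3,9,7,2); (4,1,3,3); (4,1,7,8); (4,1,9,15); (4,3,1,6); (4,3,7,4); (4,3,9,3); (4,7,1,9); (4,7,3,10); (4,7,9,12); (4,9,1,13); (4,9,3,6); (4,9,7,1); (5,1,3,15); (5,1,7,4); (5,1,9,11); (5,3,1,2); (5,3,7,0); (5,3,9,15); (5,7,1,5); (5,7,3,6); (5,7,9,8); (5,9,1,9); (5,9,3,2); (5,9,7,13); (6,1,3,6); (6,1,7,11); (6,1,9,2); (6,3,1,9); (6,3,7,7); (6,3,9,6); (6,7,1,12); (6,7,3,13); (6,7,9,15); (6,9,1,0); (6,9,3,9); (6,9,7,4); (7,1,3,12);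 (7,1,7,1); (7,1,9,8); (7,3,1,15); (7,3,7,13); (7,3,9,12); (7,7,1,2); (7,7,3,3); (7,7,9,5); (7,9,1,6); (7,9,3,15); (7,9,7,10); (8,1,3,10); (8,1,7,15); (8,1,9,6); (8,3,1,13); (8,3,7,11); (8,3,9,10); (8,7,1,0); (8,7,3,1); (8,7,9,3); (8,9,1,4); (8,9,3,13); (8,9,7,8); (9,1,3,13); (9,1,7,2); (9,1,9,9); (9,3,1,0); (9,3,7,14); (9,3,9,13); (9,7,1,3); (9,7,3,4); (9,7,9,6); (9,9,1,7); (9,9,3,0); (9,9,7,11); (10,1,3,8); (10,1,7,13); (10,1,9,4); (10,3,1,11); (10,3,7,9); (10,3,9,8); (10,7,1,14); (10,7,3,15); (10,7,9,1); (10,9,1,2); (10,9,3,11); (10,9,7,6); (11,1,3,2); (11,1,7,7); (11,1,9,14); (11,3,1,5); (11,3,7,3); (11,3,9,2); (11,7,1,8); (11,7,3,9); (11,7,9,11); (11,9,1,12); (11,9,3,5); (11,9,7,0); (12,1,3,7); (12,1,7,12); (12,1,9,3); (12,3,1,10); (12,3,7,8); (12,3,9,7); (12,7,1,13); (12,7,3,14); (12,7,9,0); (12,9,1,1); (12,9,3,10); (12,9,7,5); (13,1,3,9); (13,1,7,14); (13,1,9,5); (13,3,1,12); (13,3,7,10); (13,3,9,9); (13,7,1,15); (13,7,3,0); (13,7,9,2); (13,9,1,3); (13,9,3,12); (13,9,7,7); (14,1,3,1); (14,1,7,6); (14,1,9,13); (14,3,1,4); (14,3,7,2); (14,3,9,1);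 (14,7,1,7); (14,7,3,8); (14,7,9,10); (14,9,1,11); (14,9,3,4); (14,9,7,15); (15,1,3,5); (15,1,7,10); (15,1,9,1); (15,3,1,8); (15,3,7,6); (15,3,9,5); (15,7,1,11); (15,7,3,12); (15,7,9,14); (15,9,1,15); (15,9,3,8); (15,9,7,3)].
Definition cert19 : seq (nat*nat*nat*nat) := [::(1,1,3,10); (1,1,7,5); (1,1,9,12); (1,3,1,6); (1,3,7,16); (1,3,9,10); (1,7,1,8); (1,7,3,14); (1,7,9,4); (1,9,1,13); (1,9,3,6); (1,9,7,11); (2,1,3,16); (2,1,7,11); (2,1,9,0); (2,3,1,12); (2,3,7,4); (2,3,9,16); (2,7,1,14); (2,7,3,2); (2,7,9,10); (2,9,1,1); (2,9,3,12); (2,9,7,17); (3,1,3,6); (3,1,7,1); (3,1,9,8); (3,3,1,2); (3,3,7,12); (3,3,9,6); (3,7,1,4); (3,7,3,10); (3,7,9,0); (3,9,1,9); (3,9,3,2); (3,9,7,7); (4,1,3,2); (4,1,7,15); (4,1,9,4); (4,3,1,16); (4,3,7,8); (4,3,9,2); (4,7,1,0); (4,7,3,6); (4,7,9,14); (4,9,1,5); (4,9,3,16); (4,9,7,3); (5,1,3,17); (5,1,7,12); (5,1,9,1); (5,3,1,13); (5,3,7,5); (5,3,9,17); (5,7,1,15); (5,7,3,3); (5,7,9,11); (5,9,1,2); (5,9,3,13); (5,9,7,0); (6,1,3,1); (6,1,7,14); (6,1,9,3); (6,3,1,15); (6,3,7,7); (6,3,9,1); (6,7,1,17); (6,7,3,5);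 (6,7,9,13); (6,9,1,4); (6,9,3,15); (6,9,7,2); (7,1,3,11); (7,1,7,6); (7,1,9,13); (7,3,1,7); (7,3,7,17); (7,3,9,11); (7,7,1,9); (7,7,3,15); (7,7,9,5); (7,9,1,14); (7,9,3,7); (7,9,7,12); (8,1,3,14); (8,1,7,9); (8,1,9,16); (8,3,1,10); (8,3,7,2); (8,3,9,14); (8,7,1,12); (8,7,3,0); (8,7,9,8); (8,9,1,17); (8,9,3,10); (8,9,7,15); (9,1,3,8); (9,1,7,3); (9,1,9,10); (9,3,1,4); (9,3,7,14); (9,3,9,8); (9,7,1,6); (9,7,3,12); (9,7,9,2); (9,9,1,11); (9,9,3,4); (9,9,7,9); (10,1,3,15); (10,1,7,10); (10,1,9,17); (10,3,1,11); (10,3,7,3); (10,3,9,15); (10,7,1,13); (10,7,3,1); (10,7,9,9); (10,9,1,0); (10,9,3,11); (10,9,7,16); (11,1,3,13); (11,1,7,8); (11,1,9,15); (11,3,1,9); (11,3,7,1); (11,3,9,13); (11,7,1,11); (11,7,3,17); (11,7,9,7); (11,9,1,16); (11,9,3,9); (11,9,7,14); (12,1,3,4); (12,1,7,17); (12,1,9,6); (12,3,1,0); (12,3,7,10); (12,3,9,4); (12,7,1,2); (12,7,3,8); (12,7,9,16); (12,9,1,7); (12,9,3,0); (12,9,7,5); (13,1,3,3); (13,1,7,16); (13,1,9,5); (13,3,1,17); (13,3,7,9); (13,3,9,3); (13,7,1,1); (13,7,3,7); (13,7,9,15); (13,9,1,6); (13,9,3,17); (13,9,7,4); (14,1,3,7);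 (14,1,7,2); (14,1,9,9); (14,3,1,3); (14,3,7,13); (14,3,9,7); (14,7,1,5); (14,7,3,11); (14,7,9,1); (14,9,1,10); (14,9,3,3); (14,9,7,8); (15,1,3,12); (15,1,7,7); (15,1,9,14); (15,3,1,8); (15,3,7,0); (15,3,9,12); (15,7,1,10); (15,7,3,16); (15,7,9,6); (15,9,1,15); (15,9,3,8); (15,9,7,13); (16,1,3,5); (16,1,7,0); (16,1,9,7); (16,3,1,1); (16,3,7,11); (16,3,9,5); (16,7,1,3); (16,7,3,9); (16,7,9,17); (16,9,1,8); (16,9,3,1); (16,9,7,6); (17,1,3,0); (17,1,7,13); (17,1,9,2); (17,3,1,14); (17,3,7,6); (17,3,9,0); (17,7,1,16); (17,7,3,4); (17,7,9,12); (17,9,1,3); (17,9,3,14); (17,9,7,1)].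
Definition cert23 : seq (nat*nat*nat*nat) := [::(1,1,3,3); (1,1,7,5); (1,1,9,9); (1,3,1,12); (1,3,7,15); (1,3,9,3); (1,7,1,15); (1,7,3,5); (1,7,9,2); (1,9,1,16); (1,9,3,12); (1,9,7,10); (2,1,3,6); (2,1,7,8); (2,1,9,12); (2,3,1,15); (2,3,7,18); (2,3,9,6); (2,7,1,18); (2,7,3,8); (2,7,9,5); (2,9,1,19); (2,9,3,15); (2,9,7,13); (3,1,3,8); (3,1,7,10); (3,1,9,14); (3,3,1,17); (3,3,7,20); (3,3,9,8); (3,7,1,20); (3,7,3,10); (3,7,9,7); (3,9,1,21); (3,9,3,17); (3,9,7,15); (4,1,3,2); (4,1,7,4); (4,1,9,8); (4,3,1,11); (4,3,7,14); (4,3,9,2); (4,7,1,14); (4,7,3,4); (4,7,9,1); (4,9,1,15); (4,9,3,11); (4,9,7,9); (5,1,3,11); (5,1,7,13); (5,1,9,17); (5,3,1,20); (5,3,7,1); (5,3,9,11); (5,7,1,1); (5,7,3,13); (5,7,9,10); (5,9,1,2); (5,9,3,20); (5,9,7,18); (6,1,3,0); (6,1,7,2); (6,1,9,6); (6,3,1,9); (6,3,7,12); (6,3,9,0); (6,7,1,12); (6,7,3,2); (6,7,9,21); (6,9,1,13); (6,9,3,9); (6,9,7,7); (7,1,3,19); (7,1,7,21); (7,1,9,3); (7,3,1,6); (7,3,7,9); (7,3,9,19); (7,7,1,9); (7,7,3,21); (7,7,9,18); (7,9,1,10); (7,9,3,6); (7,9,7,4); (8,1,3,7); (8,1,7,9);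 (8,1,9,13); (8,3,1,16); (8,3,7,19); (8,3,9,7); (8,7,1,19); (8,7,3,9); (8,7,9,6); (8,9,1,20); (8,9,3,16); (8,9,7,14); (9,1,3,12); (9,1,7,14); (9,1,9,18); (9,3,1,21); (9,3,7,2); (9,3,9,12); (9,7,1,2); (9,7,3,14); (9,7,9,11); (9,9,1,3); (9,9,3,21); (9,9,7,19); (10,1,3,20); (10,1,7,0); (10,1,9,4); (10,3,1,7); (10,3,7,10); (10,3,9,20); (10,7,1,10); (10,7,3,0); (10,7,9,19); (10,9,1,11); (10,9,3,7); (10,9,7,5); (11,1,3,4); (11,1,7,6); (11,1,9,10); (11,3,1,13); (11,3,7,16); (11,3,9,4); (11,7,1,16); (11,7,3,6); (11,7,9,3); (11,9,1,17); (11,9,3,13); (11,9,7,11); (12,1,3,21); (12,1,7,1); (12,1,9,5); (12,3,1,8); (12,3,7,11); (12,3,9,21); (12,7,1,11); (12,7,3,1); (12,7,9,20); (12,9,1,12); (12,9,3,8); (12,9,7,6); (13,1,3,14); (13,1,7,16); (13,1,9,20); (13,3,1,1); (13,3,7,4); (13,3,9,14); (13,7,1,4); (13,7,3,16); (13,7,9,13); (13,9,1,5); (13,9,3,1); (13,9,7,21); (14,1,3,10); (14,1,7,12); (14,1,9,16); (14,3,1,19); (14,3,7,0); (14,3,9,10); (14,7,1,0); (14,7,3,12); (14,7,9,9); (14,9,1,1); (14,9,3,19); (14,9,7,17); (15,1,3,1); (15,1,7,3); (15,1,9,7); (15,3,1,10); (15,3,7,13); (15,3,9,1); (15,7,1,13);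 (15,7,3,3); (15,7,9,0); (15,9,1,14); (15,9,3,10); (15,9,7,8); (16,1,3,5); (16,1,7,7); (16,1,9,11); (16,3,1,14); (16,3,7,17); (16,3,9,5); (16,7,1,17); (16,7,3,7); (16,7,9,4); (16,9,1,18); (16,9,3,14); (16,9,7,12); (17,1,3,17); (17,1,7,19); (17,1,9,1); (17,3,1,4); (17,3,7,7); (17,3,9,17); (17,7,1,7); (17,7,3,19); (17,7,9,16); (17,9,1,8); (17,9,3,4); (17,9,7,2); (18,1,3,9); (18,1,7,11); (18,1,9,15); (18,3,1,18); (18,3,7,21); (18,3,9,9); (18,7,1,21); (18,7,3,11); (18,7,9,8); (18,9,1,0); (18,9,3,18); (18,9,7,16); (19,1,3,16); (19,1,7,18); (19,1,9,0); (19,3,1,3); (19,3,7,6); (19,3,9,16); (19,7,1,6); (19,7,3,18); (19,7,9,15); (19,9,1,7); (19,9,3,3); (19,9,7,1); (20,1,3,15); (20,1,7,17); (20,1,9,21); (20,3,1,2); (20,3,7,5); (20,3,9,15); (20,7,1,5); (20,7,3,17); (20,7,9,14); (20,9,1,6); (20,9,3,2); (20,9,7,0); (21,1,3,13); (21,1,7,15); (21,1,9,19); (21,3,1,0); (21,3,7,3); (21,3,9,13); (21,7,1,3); (21,7,3,15); (21,7,9,12); (21,9,1,4); (21,9,3,0); (21,9,7,20)].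
Definition cert29 : seq (nat*nat*nat*nat) := [::(1,1,3,3); (1,1,7,4); (1,1,9,9); (1,3,1,16); (1,3,7,19); (1,3,9,3); (1,7,1,10); (1,7,3,26); (1,7,9,23); (1,9,1,21); (1,9,3,16); (1,9,7,15); (2,1,3,26); (2,1,7,27); (2,1,9,4); (2,3,1,11); (2,3,7,14); (2,3,9,26); (2,7,1,5); (2,7,3,21); (2,7,9,18); (2,9,1,16); (2,9,3,11); (2,9,7,10); (3,1,3,7); (3,1,7,8); (3,1,9,13); (3,3,1,20); (3,3,7,23); (3,3,9,7); (3,7,1,14); (3,7,3,2); (3,7,9,27); (3,9,1,25); (3,9,3,20); (3,9,7,19); (4,1,3,1); (4,1,7,2); (4,1,9,7); (4,3,1,14); (4,3,7,17); (4,3,9,1); (4,7,1,8); (4,7,3,24); (4,7,9,21); (4,9,1,19); (4,9,3,14); (4,9,7,13); (5,1,3,25); (5,1,7,26); (5,1,9,3); (5,3,1,10); (5,3,7,13); (5,3,9,25); (5,7,1,4); (5,7,3,20); (5,7,9,17); (5,9,1,15); (5,9,3,10); (5,9,7,9); (6,1,3,24); (6,1,7,25); (6,1,9,2); (6,3,1,9); (6,3,7,12); (6,3,9,24); (6,7,1,3); (6,7,3,19); (6,7,9,16); (6,9,1,14); (6,9,3,9); (6,9,7,8); (7,1,3,21); (7,1,7,22); (7,1,9,27); (7,3,1,6); (7,3,7,9); (7,3,9,21); (7,7,1,0); (7,7,3,16); (7,7,9,13); (7,9,1,11); (7,9,3,6); (7,9,7,5); (8,1,3,9); (8,1,7,10);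 (8,1,9,15); (8,3,1,22); (8,3,7,25); (8,3,9,9); (8,7,1,16); (8,7,3,4); (8,7,9,1); (8,9,1,27); (8,9,3,22); (8,9,7,21); (9,1,3,12); (9,1,7,13); (9,1,9,18); (9,3,1,25); (9,3,7,0); (9,3,9,12); (9,7,1,19); (9,7,3,7); (9,7,9,4); (9,9,1,2); (9,9,3,25); (9,9,7,24); (10,1,3,23); (10,1,7,24); (10,1,9,1); (10,3,1,8); (10,3,7,11); (10,3,9,23); (10,7,1,2); (10,7,3,18); (10,7,9,15); (10,9,1,13); (10,9,3,8); (10,9,7,7); (11,1,3,5); (11,1,7,6); (11,1,9,11); (11,3,1,18); (11,3,7,21); (11,3,9,5); (11,7,1,12); (11,7,3,0); (11,7,9,25); (11,9,1,23); (11,9,3,18); (11,9,7,17); (12,1,3,20); (12,1,7,21); (12,1,9,26); (12,3,1,5); (12,3,7,8); (12,3,9,20); (12,7,1,27); (12,7,3,15); (12,7,9,12); (12,9,1,10); (12,9,3,5); (12,9,7,4); (13,1,3,13); (13,1,7,14); (13,1,9,19); (13,3,1,26); (13,3,7,1); (13,3,9,13); (13,7,1,20); (13,7,3,8); (13,7,9,5); (13,9,1,3); (13,9,3,26); (13,9,7,25); (14,1,3,2); (14,1,7,3); (14,1,9,8); (14,3,1,15); (14,3,7,18); (14,3,9,2); (14,7,1,9); (14,7,3,25); (14,7,9,22); (14,9,1,20); (14,9,3,15); (14,9,7,14); (15,1,3,14); (15,1,7,15); (15,1,9,20); (15,3,1,27); (15,3,7,2); (15,3,9,14); (15,7,1,21);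 (15,7,3,9); (15,7,9,6); (15,9,1,4); (15,9,3,27); (15,9,7,26); (16,1,3,22); (16,1,7,23); (16,1,9,0); (16,3,1,7); (16,3,7,10); (16,3,9,22); (16,7,1,1); (16,7,3,17); (16,7,9,14); (16,9,1,12); (16,9,3,7); (16,9,7,6); (17,1,3,8); (17,1,7,9); (17,1,9,14); (17,3,1,21); (17,3,7,24); (17,3,9,8); (17,7,1,15); (17,7,3,3); (17,7,9,0); (17,9,1,26); (17,9,3,21); (17,9,7,20); (18,1,3,27); (18,1,7,0); (18,1,9,5); (18,3,1,12); (18,3,7,15); (18,3,9,27); (18,7,1,6); (18,7,3,22); (18,7,9,19); (18,9,1,17); (18,9,3,12); (18,9,7,11); (19,1,3,17); (19,1,7,18); (19,1,9,23); (19,3,1,2); (19,3,7,5); (19,3,9,17); (19,7,1,24); (19,7,3,12); (19,7,9,9); (19,9,1,7); (19,9,3,2); (19,9,7,1); (20,1,3,15); (20,1,7,16); (20,1,9,21); (20,3,1,0); (20,3,7,3); (20,3,9,15); (20,7,1,22); (20,7,3,10); (20,7,9,7); (20,9,1,5); (20,9,3,0); (20,9,7,27); (21,1,3,0); (21,1,7,1); (21,1,9,6); (21,3,1,13); (21,3,7,16); (21,3,9,0); (21,7,1,7); (21,7,3,23); (21,7,9,20); (21,9,1,18); (21,9,3,13); (21,9,7,12); (22,1,3,4); (22,1,7,5); (22,1,9,10); (22,3,1,17); (22,3,7,20); (22,3,9,4); (22,7,1,11); (22,7,3,27); (22,7,9,24); (22,9,1,22); (22,9,3,17); (22,9,7,16);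 (23,1,3,6); (23,1,7,7); (23,1,9,12); (23,3,1,19); (23,3,7,22); (23,3,9,6); (23,7,1,13); (23,7,3,1); (23,7,9,26); (23,9,1,24); (23,9,3,19); (23,9,7,18); (24,1,3,11); (24,1,7,12); (24,1,9,17); (24,3,1,24); (24,3,7,27); (24,3,9,11); (24,7,1,18); (24,7,3,6); (24,7,9,3); (24,9,1,1); (24,9,3,24); (24,9,7,23); (25,1,3,18); (25,1,7,19); (25,1,9,24); (25,3,1,3); (25,3,7,6); (25,3,9,18); (25,7,1,25); (25,7,3,13); (25,7,9,10); (25,9,1,8); (25,9,3,3); (25,9,7,2); (26,1,3,10); (26,1,7,11); (26,1,9,16); (26,3,1,23); (26,3,7,26); (26,3,9,10); (26,7,1,17); (26,7,3,5); (26,7,9,2); (26,9,1,0); (26,9,3,23); (26,9,7,22); (27,1,3,16); (27,1,7,17); (27,1,9,22); (27,3,1,1); (27,3,7,4); (27,3,9,16); (27,7,1,23); (27,7,3,11); (27,7,9,8); (27,9,1,6); (27,9,3,1); (27,9,7,0)].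

Definition smallcheck :=
  all (fun t => let: (m,a,b,k,p) := t in [&& k <= m, fdm p (sk m k a b) == 0 & 1 < p < 1000]) smallcert &&
  all (fun m => all (fun a => all (fun b => (a != b) ==>
    has (fun t => let: (m',a',b',k,p) := t in [&& m' == m, a' == a & b' == b]) smallcert) D) D) (iota 3 24).

Lemma smallcheck_ok : smallcheck.
Proof. Time vm_compute. done. Qed.

Definition bigcheck p q (cert : seq (nat*nat*nat*nat)) := [&& pw p q == 1, fdm p (nseq q 1) == 0,
  all (fun t => let: (r,a,b,k) := t in (k < q) &&
    ((a * fdm p (nseq ((r + q - k.+1) %% q) 1) * pw p k.+1 + b * pw p k + a * fdm p (nseq k 1)) %% p == 0)) cert &
  all (fun r => all (fun a => all (fun b => (a != b) ==>
    has (fun t => let: (r',a',b',k) := t in [&& r' == r, a' == a & b' == b]) cert) D) D) (iota 1 q.-1)].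

Lemma bigcheck_ok : [&& bigcheck 17 16 cert17, bigcheck 19 18 cert19, bigcheck 23 22 cert23 & bigcheck 29 28 cert29].
Proof. Time vm_compute. done. Qed.

Lemma sk_contra L a b m k p : Hyp L -> (forall x, x \in L -> x \in D) -> a \in D -> b \in D ->
  (forall x, x \in D -> count_mem x L = (a == x) * m + (b == x)) ->
  size L = m.+1 -> 3 <= m ->
  k <= m -> 1 < p -> p < 1000 -> fdm p (sk m k a b) == 0 -> False.
Proof.
move=> H HD Ha Hb Hc Hsize Hm Hk Hp1 Hp2 Hf.
have Hs := sk_perm Ha Hb HD Hc Hk.
apply: (nodiv H Hs Hp1).
  have := fd_big HD Hs (ltac:(lia) : 4 <= size L); lia.
by rewrite /dvdn -fdmE.
Qed.

Lemma per_dvd L a b m p q cert : Hyp L -> (forall x, x \in L -> x \in D) -> a \in D -> b \in D -> a != b ->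
  (forall x, x \in D -> count_mem x L = (a == x) * m + (b == x)) ->
  size L = m.+1 -> 27 <= m -> 0 < q -> q <= 28 -> 1 < p -> p < 1000 -> bigcheck p q cert ->
  q %| m.+1.
Proof.
move=> H HD Ha Hb Hab Hc Hsize Hm Hq0 Hq Hp1 Hp2 /and4P [/eqP H1 /eqP H0 /allP Hv /allP Hcov].
apply/negPn/negP => Hnd.
set r := m.+1 %% q.
have Hr : r \in iota 1 q.-1.
  rewrite mem_iota; have := ltn_pmod m.+1 Hq0; rewrite /dvdn in Hnd; rewrite -/r in Hnd *.
  case: r Hnd => //; lia.
have := Hcov r Hr => /allP /(_ a Ha) /allP /(_ b Hb) /implyP /(_ Hab) /hasP [[[[r' a'] b'] k] Hin].
move=> /and3P [/eqP Er /eqP Ea /eqP Eb]; subst r' a' b'.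
move: (Hv _ Hin) => /andP [Hk /eqP Hf].
apply: (sk_contra H HD Ha Hb Hc Hsize (ltac:(lia)) (ltac:(lia) : k <= m) Hp1 Hp2).
rewrite fdmE fd_sk modE3.
have HF1 : 10 ^ q %% p = 1 by rewrite -pwE.
have HF0 : F q %% p = 0 by rewrite /F -fdmE.
have Emod : (m - k) %% q = (r + q - k.+1) %% q.
  apply/eqP; rewrite -(eqn_modDr k.+1).
  have -> : m - k + k.+1 = m.+1 by lia.
  have -> : r + q - k.+1 + k.+1 = r + q by lia.
  by rewrite modnDr /r modn_mod.
rewrite (F_per _ HF1 HF0) Emod -!pwE /F -!fdmE. by rewrite Hf.
Qed.

Lemma final L a b m : Hyp L -> (forall x, x \in L -> x \in D) -> a \in D -> b \in D -> a != b ->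
  (forall x, x \in D -> count_mem x L = (a == x) * m + (b == x)) ->
  size L = m.+1 -> 3 <= m -> 11088 %| m.+1.
Proof.
move=> H HD Ha Hb Hab Hc Hsize Hm.
case: (ltnP m 27) => Hm27.
  exfalso.
  have /andP [/allP Hv /allP Hcov] := smallcheck_ok.
  have Hmi : m \in iota 3 24 by rewrite mem_iota; lia.
  have := Hcov m Hmi => /allP /(_ a Ha) /allP /(_ b Hb) /implyP /(_ Hab) /hasP [[[[[m' a'] b'] k] p] Hin].
  move=> /and3P [/eqP Em /eqP Ea /eqP Eb]; subst m' a' b'.
  move: (Hv _ Hin) => /and3P [Hk Hf /andP [Hp1 Hp2]].
  exact: (sk_contra H HD Ha Hb Hc Hsize Hm Hk Hp1 Hp2 Hf).
have /and4P [B17 B19 B23 B29] := bigcheck_ok.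
have D16 := per_dvd (p:=17) (q:=16) H HD Ha Hb Hab Hc Hsize Hm27 isT isT isT isT B17.
have D18 := per_dvd (p:=19) (q:=18) H HD Ha Hb Hab Hc Hsize Hm27 isT isT isT isT B19.
have D22 := per_dvd (p:=23) (q:=22) H HD Ha Hb Hab Hc Hsize Hm27 isT isT isT isT B23.
have D28 := per_dvd (p:=29) (q:=28) H HD Ha Hb Hab Hc Hsize Hm27 isT isT isT isT B29.
have -> : 11088 = lcmn (lcmn (lcmn 16 18) 22) 28 by vm_compute.
by rewrite !dvdn_lcm D16 D18 D22 D28.
Qed.


Lemma fin' L a b m : Hyp L -> (forall x, x \in L -> x \in D) -> a \in D -> b \in D -> a != b ->
  (forall x, x \in D -> count_mem x L = (a == x) * m + (b == x)) ->
  size L = m.+1 -> 3 <= m -> 11088 %| size L.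
Proof. move=> H HD Ha Hb Hab Hc Hs Hm; rewrite Hs; exact: (final H HD Ha Hb Hab Hc Hs Hm). Qed.

Lemma all_same (L : seq nat) n d : perm_eq L (nseq n d) -> L = nseq (size L) d.
Proof.
move=> Hp; apply/all_pred1P/allP => x; rewrite (perm_mem Hp) => /nseqP [-> _] /=; exact: eqxx.
Qed.



Lemma all1_contra (L : seq nat) n : perm_eq L (M n 0 0 0) -> ~ is_repunit (fd L) -> False.
Proof.
move=> Hp Hr; apply: Hr; exists (size L).
have Hp' : perm_eq L (nseq n 1) by rewrite /M /= cats0 in Hp.
by rewrite {1}(all_same Hp') -F_repunit.
Qed.

Lemma all7_contra L n : Hyp L -> (forall x, x \in L -> x \in D) -> 4 <= size L ->
  perm_eq L (M 0 0 n 0) -> False.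
Proof.
move=> H HD Hsz Hp.
have Hp' : perm_eq L (nseq n 7) by rewrite /M /= cats0 in Hp.
apply: (nodiv H (perm_refl L) (p := 7)) => //.
  have := fd_big HD (perm_refl L) Hsz; lia.
move: (all_same Hp') => E; by rewrite [X in fd X]E fd_nseq dvdn_mulr.
Qed.

Ltac side HcL Hsum Hsz := solve [ done | move=> ? _; rewrite HcL; lia | rewrite Hsum; lia | lia ].

Ltac trypair H HD Hp HcL Hsum Hsz :=
  match type of Hp with is_true (perm_eq _ (M ?c1 ?c3 ?c7 ?c9)) =>
  first [
    solve [apply: (fin' (a:=1) (b:=3) (m:=c1) H HD); side HcL Hsum Hsz]
  | solve [apply: (fin' (a:=1) (b:=7) (m:=c1) H HD); side HcL Hsum Hsz]
  | solve [apply: (fin' (a:=1) (b:=9) (m:=c1) H HD); side HcL Hsum Hsz]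
  | solve [apply: (fin' (a:=3) (b:=1) (m:=c3) H HD); side HcL Hsum Hsz]
  | solve [apply: (fin' (a:=3) (b:=7) (m:=c3) H HD); side HcL Hsum Hsz]
  | solve [apply: (fin' (a:=3) (b:=9) (m:=c3) H HD); side HcL Hsum Hsz]
  | solve [apply: (fin' (a:=7) (b:=1) (m:=c7) H HD); side HcL Hsum Hsz]
  | solve [apply: (fin' (a:=7) (b:=3) (m:=c7) H HD); side HcL Hsum Hsz]
  | solve [apply: (fin' (a:=7) (b:=9) (m:=c7) H HD); side HcL Hsum Hsz]
  | solve [apply: (fin' (a:=9) (b:=1) (m:=c9) H HD); side HcL Hsum Hsz]
  | solve [apply: (fin' (a:=9) (b:=3) (m:=c9) H HD); side HcL Hsum Hsz]
  | solve [apply: (fin' (a:=9) (b:=7) (m:=c9) H HD); side HcL Hsum Hsz] ]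
  end.

Lemma cases L c1 c3 c7 c9 : Hyp L -> (forall x, x \in L -> x \in D) ->
  perm_eq L (M c1 c3 c7 c9) -> goodb c1 c3 c7 c9 -> 4 <= size L -> ~ is_repunit (fd L) ->
  11088 %| size L.
Proof.
move=> H HD Hp Hg Hsz Hr.
have Hsum : size L = c1 + c3 + c7 + c9 by rewrite (perm_size Hp) size_M.
have HcL : forall x, count_mem x L = (1 == x) * c1 + (3 == x) * c3 + (7 == x) * c7 + (9 == x) * c9.
  by move=> x; rewrite ((permP Hp) (pred1 x)) count_M.
move: Hg Hp Hsum HcL.
case: c1 => [|[|c1]]; case: c3 => [|[|c3]]; case: c7 => [|[|c7]]; case: c9 => [|[|c9]];
move=> Hg Hp Hsum HcL; rewrite /goodb /= in Hg;
first [ done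
      | exfalso; rewrite Hsum in Hsz; done
      | exfalso; exact: (all1_contra Hp Hr)
      | exfalso; exact: (all7_contra H HD Hsz Hp)
      | exfalso; exact: (mod3_contra H HD Hsz Hp (erefl _))
      | trypair H HD Hp HcL Hsum Hsz ]. 
Qed.

Theorem theorem2 (N : nat) :
  absolute_prime N -> 3 < size (digits N) -> ~ is_repunit N ->
  11088 %| size (digits N).
Proof.
move=> [HN Hall] Hsz Hr.
set L := digits N.
have H : Hyp L by move=> s Hs; exact: Hall.
have Hlt : forall x, x \in L -> x < 10 by move=> x; exact: digits_lt.
have HD := digits_D H Hlt (ltnW (ltnW Hsz)).
have Hg := structure H HD Hsz.
have Hp := perm_M HD.
apply: (cases H HD Hp Hg Hsz).
by rewrite /L digits_fd.
Qed.
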